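(* Let $R:\ \mu=\rho^{(0)}\to\dots\to\rho^{(l)}=\nu$ be a sequence of diagrams and let $T\in\mathcal{T}(\lambda,R)$ be $\nu$-bounded. Then $\rho(\alpha)_{T(\alpha)}>c(\alpha)$ for all boxes $\alpha\in\lambda$ with $T(\alpha)$ unbarred.
   Context: Partitions are identified with Young diagrams; box $(i,j)$ is in row $i$, column $j$; content $c(\alpha)=j-i$; $\nu'_j$ is the length of column $j$ of $\nu$. A reverse $\lambda$-tableau is a filling $T$ of $\lambda$ by positive integers weakly decreasing along rows and strictly decreasing down columns. $\rho\to\sigma$ means $\sigma$ is obtained from $\rho$ by adding one box; for $R:\ \mu=\rho^{(0)}\to\dots\to\rho^{(l)}=\nu$, $r_i$ is the row of the box added to $\rho^{(i-1)}$. Column order: columns left to right, within a column bottom to top; $\prec$ is strict precedence. $\mathcal{T}(\lambda,R)$ consists of reverse $\lambda$-tableaux $T$ with chosen boxes $\alpha_1\prec\dots\prec\alpha_l$ such that $T(\alpha_i)=r_i$; those entries are barred, the rest unbarred. For $\alpha$ with $\alpha_i\prec\alpha\prec\alpha_{i+1}$ ($0\le i\le l$, conditions with $\alpha_0,\alpha_{l+1}$ void), $\rho(\alpha)=\rho^{(i)}$, and $\rho(\alpha)_k$ is the length of row $k$ of $\rho(\alpha)$. $T$ is $\nu$-bounded if $T(1,j)\le\nu'_j$ for all $j=1,\dots,\lambda_1$. *)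

(* Defs.v *)
From mathcomp Require Import all_boot all_order all_algebra.
Set Implicit Arguments. Unset Strict Implicit. Unset Printing Implicit Defensive.
Import GRing.Theory Num.Theory.

Definition is_partition (p : seq nat) : bool :=
  sorted geq p && all (fun x => 0 < x) p.

(* Length of row k (1-indexed) of the diagram p. *)
Definition rowlen (p : seq nat) (k : nat) : nat := nth 0 p k.-1.

Definition collen (p : seq nat) (j : nat) : nat := count (fun r => j <= r) p.

(* Boxes are pairs (i, j) = (row, column), 1-indexed. *)
Definition in_diag (p : seq nat) (a : nat * nat) : bool :=
  [&& 0 < a.1, 0 < a.2 & a.2 <= rowlen p a.1].

Definition content (a : nat * nat) : int := (a.2%:Z - a.1%:Z)%R.

(* The sequence R : mu = rho^(0) -> ... -> rho^(l), encoded by mu and the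
   rows r_1, ..., r_l of the added boxes; rho^(i) adds one box to rows
   r_1..r_i successively. *)
Definition rho (mu : seq nat) (rs : seq nat) (i : nat) : seq nat :=
  foldl (fun p r => incr_nth p r.-1) mu (take i rs).

(* Validity of R: all rho^(i) are partitions (so each step adds one box to a
   diagram, giving a diagram), rows are positive. *)
Definition valid_chain (mu : seq nat) (rs : seq nat) : Prop :=
  all (fun r => 0 < r) rs /\ forall i, i <= size rs -> is_partition (rho mu rs i).

Definition reverse_tableau (lam : seq nat) (T : nat -> nat -> nat) : Prop :=
  [/\ forall a, in_diag lam a -> 0 < T a.1 a.2,
      forall i j, in_diag lam (i, j.+1) -> T i j.+1 <= T i j
    & forall i j, in_diag lam (i.+1, j) -> T i.+1 j < T i j].

Definition colprec (a b : nat * nat) : bool :=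
  (a.2 < b.2) || ((a.2 == b.2) && (b.1 < a.1)).

(* (T, al) in T(lambda, R): al = [alpha_1; ...; alpha_l] chosen boxes,
   strictly increasing in column order, with T(alpha_i) = r_i. *)
Definition in_TlamR (lam mu rs : seq nat) (T : nat -> nat -> nat)
    (al : seq (nat * nat)) : Prop :=
  [/\ reverse_tableau lam T,
      size al = size rs,
      all (in_diag lam) al,
      sorted colprec al
    & forall i, i < size rs -> T (nth (0, 0) al i).1 (nth (0, 0) al i).2 = nth 0 rs i].

(* rho(alpha) = rho^(i) where alpha_i < alpha < alpha_{i+1}, i.e. i is the
   number of chosen boxes preceding alpha. *)
Definition rho_at (mu rs : seq nat) (al : seq (nat * nat)) (a : nat * nat) :=
  rho mu rs (count (fun b => colprec b a) al).

Definition nu_bounded (lam nu : seq nat) (T : nat -> nat -> nat) : Prop :=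
  forall j, 1 <= j <= rowlen lam 1 -> T 1 j <= collen nu j.

(* Main.v *)
Require Import Defs.
From mathcomp Require Import all_boot all_order all_algebra.
Import GRing.Theory Num.Theory.
Set Implicit Arguments. Unset Strict Implicit.

Lemma rowlen_mono lam p q : is_partition lam -> 0 < q -> q <= p ->
  rowlen lam p <= rowlen lam q.
Proof.
move=> /andP[Hs _] Hq Hqp; rewrite /rowlen.
have Hqp' : q.-1 <= p.-1 by rewrite -!subn1 leq_sub2r.
case: (ltnP p.-1 (size lam)) => Hp; last by rewrite nth_default.
have Hq' : q.-1 < size lam by apply: leq_ltn_trans Hp.
have Htr : transitive geq by move=> x y z /= H1 H2; exact: leq_trans H2 H1.
have := (sorted_leq_nth Htr (fun x => leqnn x) 0 Hs).
move=> H; have := H q.-1 p.-1 Hq' Hp Hqp'. by [].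
Qed.

Lemma in_diag_up lam p q j : is_partition lam -> 0 < q -> q <= p ->
  in_diag lam (p, j) -> in_diag lam (q, j).
Proof.
move=> Hl Hq Hqp /and3P[/= _ Hj Hr]; apply/and3P; split => //=.
by apply: (leq_trans Hr); apply: rowlen_mono.
Qed.

Lemma col_strict lam T p q j : is_partition lam -> reverse_tableau lam T ->
  0 < q -> q < p -> in_diag lam (p, j) -> T p j < T q j.
Proof.
move=> Hl [_ _ Hc] Hq; elim: p => [//|p IH] Hqp Hd.
have Hqp' : q <= p by [].
have Hp : 0 < p by apply: leq_trans Hq Hqp'.
have Hlt := Hc _ _ Hd.
case: (ltngtP q p) => H.
- apply: ltn_trans Hlt (IH H _).
  by apply: in_diag_up Hd.
- by rewrite leqNgt H in Hqp'.
- by subst.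
Qed.

Lemma col_weak lam T p j : is_partition lam -> reverse_tableau lam T ->
  0 < p -> in_diag lam (p, j) -> T p j <= T 1 j.
Proof.
move=> Hl HT Hp Hd; case: (ltngtP 1 p) => H.
- exact: ltnW (col_strict Hl HT (ltn0Sn 0) H Hd).
- by move: H; rewrite ltnS leqn0 => /eqP H; subst.
- by subst.
Qed.

Lemma prefix_count (T : eqType) (e : rel T) (P : pred T) (s : seq T) x0 :
  transitive e -> sorted e s -> (forall x y, e x y -> P y -> P x) ->
  forall k, k < size s -> P (nth x0 s k) = (k < count P s).
Proof.
move=> Htr; elim: s => [//|x s IH] /= Hs Hpre k Hk.
have Hs' := path_sorted Hs.
have Hall := order_path_min Htr Hs.
case Px: (P x).
- case: k Hk => [|k] Hk /=; first by rewrite Px.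
  by rewrite IH.
- have Hnone : forall y, y \in s -> ~~ P y.
    move=> y Hy; apply/negP => Py.
    move/allP: Hall => /(_ y Hy) Hxy.
    by rewrite (Hpre _ _ Hxy Py) in Px.
  have -> : count P s = 0.
    by apply/eqP; rewrite -leqn0 leqNgt -has_count; apply/hasPn.
  case: k Hk => [|k] Hk /=; first by rewrite Px.
  by apply/negbTE/Hnone/mem_nth.
Qed.

Lemma rho_row mu rs n t : all (fun r => 0 < r) rs -> 0 < t ->
  rowlen (rho mu rs n) t = rowlen mu t + count (pred1 t) (take n rs).
Proof.
rewrite /rho /rowlen => Hall Ht.
have : all (fun r => 0 < r) (take n rs).
  by apply/allP => x /mem_take Hx; move/allP: Hall; apply.
elim: (take n rs) mu => [|r s IH] mu /=; first by rewrite addn0.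
move=> /andP[Hr Hs].
have E : (r.-1 == t.-1) = (r == t).
  by apply/eqP/eqP => [E|->] //; rewrite -(prednK Hr) -(prednK Ht) E.
by rewrite IH // nth_incr_nth E /= addnCA addnA.
Qed.

Lemma colprec_trans : transitive colprec.
Proof.
move=> [y1 y2] [x1 x2] [z1 z2]; rewrite /colprec /=.
case/orP=> [H1|/andP[/eqP E1 H1]]; case/orP=> [H2|/andP[/eqP E2 H2]].
- by rewrite (ltn_trans H1 H2).
- by subst; rewrite H1.
- by subst; rewrite H2.
- by subst; rewrite eqxx (ltn_trans H2 H1) orbT.
Qed.

Lemma colprec_irr : irreflexive colprec.
Proof. by move=> [x1 x2]; rewrite /colprec /= ltnn eqxx ltnn. Qed.

Lemma colprec_total x y : x != y -> ~~ colprec y x -> colprec x y.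
Proof.
case: x y => [x1 x2] [y1 y2]; rewrite /colprec /= => Hne.
case: (ltngtP x2 y2) => E //=.
subst; rewrite -leqNgt => H.
rewrite ltn_neqAle H andbT; apply: contra Hne => /eqP ->; by [].
Qed.

Lemma collen_row nu t j : is_partition nu -> 0 < t -> t <= collen nu j ->
  j <= rowlen nu t.
Proof.
move=> /andP[Hs _] Ht Hc; rewrite /rowlen.
have Htr : transitive geq by move=> x y z /= H1 H2; exact: leq_trans H2 H1.
have Hk : t.-1 < count (fun r => j <= r) nu by rewrite prednK.
have Hsz : t.-1 < size nu by apply: leq_trans Hk (count_size _ _).
rewrite (prefix_count 0 Htr Hs _ Hsz) //.
by move=> x y /= Hxy Hy; apply: leq_trans Hy Hxy.
Qed.

Lemma col_bound lam nu T b : is_partition lam -> reverse_tableau lam T ->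
  is_partition nu -> nu_bounded lam nu T -> in_diag lam b ->
  b.2 <= rowlen nu (T b.1 b.2).
Proof.
move=> Hl HT Hnu Hbd Hb.
have [Hpos _ _] := HT.
case: b Hb => [p q] Hb /=.
have /and3P[/= Hp Hq Hqr] := Hb.
apply: collen_row => //; first exact: (Hpos _ Hb).
apply: leq_trans (col_weak Hl HT Hp Hb) _.
apply: Hbd; rewrite Hq /=.
by apply: (leq_trans Hqr); apply: rowlen_mono.
Qed.

Unset Implicit Arguments.

Theorem lemma2p5 (lam mu rs : seq nat) (T : nat -> nat -> nat)
    (al : seq (nat * nat)) :
  is_partition lam ->
  valid_chain mu rs ->
  in_TlamR lam mu rs T al ->
  nu_bounded lam (rho mu rs (size rs)) T ->
  forall a : nat * nat, in_diag lam a -> a \notin al ->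
    (content a < (rowlen (rho_at mu rs al a) (T a.1 a.2))%:Z)%R.
Proof.
move=> Hlam [Hpos Hchain] [HT Hsz Hall Hsort Hnth] Hbd a Ha Hna.
set nu := rho mu rs (size rs).
have Hnu : is_partition nu := Hchain _ (leqnn _).
case: a Ha Hna => i j Ha Hna /=.
have /and3P[/= Hi Hj Hjr] := Ha.
set t := T i j.
have Ht : 0 < t by case: HT => H _ _; exact: (H _ Ha).
rewrite /rho_at /=.
set c := count (fun b => colprec b (i, j)) al.
have Hrs : rs = map (fun b => T b.1 b.2) al.
  apply: (eq_from_nth (x0:=0)); first by rewrite size_map Hsz.
  move=> k Hk; rewrite (nth_map (0,0)) /=; first by rewrite Hnth.
  by rewrite Hsz.
have Erow : rowlen nu t = rowlen (rho mu rs c) t + count (pred1 t) (drop c rs).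
  by rewrite /nu !rho_row // take_size -addnA -count_cat cat_take_drop.
have Hjnu : j <= rowlen nu t.
  by have := col_bound Hlam HT Hnu Hbd Ha.
set F := filter (fun b => T b.1 b.2 == t) (drop c al).
have Hcnt : count (pred1 t) (drop c rs) = size F.
  by rewrite Hrs -map_drop count_map size_filter.
have Hdrop : forall b, b \in drop c al -> ~~ colprec b (i, j).
  move=> b /(nthP (0,0)) [k Hk <-].
  rewrite nth_drop.
  have Hk' : c + k < size al by move: Hk; rewrite size_drop ltn_subRL.
  have Hpre : forall x y, colprec x y -> colprec y (i, j) -> colprec x (i, j).
    by move=> x y Hxy Hy; apply: colprec_trans Hxy Hy.
  have := prefix_count (P:=fun b => colprec b (i, j)) (0,0) colprec_trans Hsort Hpre Hk'.
  move=> /= ->.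
  by rewrite -/c -leqNgt leq_addr.
have HF : forall b, b \in F -> [/\ in_diag lam b, T b.1 b.2 = t & j < b.2].
  move=> b; rewrite mem_filter => /andP[/eqP Hbt Hbd'].
  have Hbal := mem_drop Hbd'.
  have Hbl : in_diag lam b by move/allP: Hall; apply.
  split => //.
  have Hne : b != (i, j) by apply/eqP => E; rewrite -E Hbal in Hna.
  rewrite eq_sym in Hne.
  have := colprec_total Hne (Hdrop _ Hbd').
  case: b Hbt Hbd' Hbal Hbl Hne => b1 b2 /= Hbt _ _ Hbl _.
  rewrite /colprec /= => /orP[//|/andP[/eqP E Hb1]].
  subst b2.
  have /and3P[/= Hb1p _ _] := Hbl.
  have := col_strict Hlam HT Hb1p Hb1 Ha.
  by rewrite Hbt /t ltnn.
have HuF : uniq F.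
  apply: filter_uniq; apply: drop_uniq.
  exact: sorted_uniq colprec_trans colprec_irr _ Hsort.
have Hu : uniq (map snd F).
  rewrite map_inj_in_uniq // => [[x1 x2] [y1 y2]] Hx Hy /= E.
  subst y2.
  have [Hxl Hxt _] := HF _ Hx.
  have [Hyl Hyt _] := HF _ Hy.
  move: Hxt Hyt => /= Hxt Hyt.
  have /and3P[/= Hx1 _ _] := Hxl.
  have /and3P[/= Hy1 _ _] := Hyl.
  case: (ltngtP x1 y1) => E //.
  - by have := col_strict Hlam HT Hx1 E Hyl; rewrite Hxt Hyt ltnn.
  - by have := col_strict Hlam HT Hy1 E Hxl; rewrite Hxt Hyt ltnn.
  - by rewrite E.
have Hsub : {subset map snd F <= iota j.+1 (rowlen nu t - j)}.
  move=> x /mapP[b Hb ->]; have [Hbl Hbt Hjb] := HF _ Hb.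
  rewrite mem_iota Hjb /= addSn subnKC // ltnS.
  by have := col_bound Hlam HT Hnu Hbd Hbl; rewrite Hbt.
have Hle := uniq_leq_size Hu Hsub.
rewrite size_map size_iota -Hcnt in Hle.
have Hjr' : j <= rowlen (rho mu rs c) t.
  rewrite -(subKn Hjnu); apply: leq_trans (leq_sub2l _ Hle) _.
  by rewrite Erow addnK.
rewrite /content /= ltrBlDr -PoszD ltz_nat -addn1.
exact: leq_add.
Qed.
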